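(* Let $\mathbf{c}=\{c_n\}_{n=-\infty}^{\infty}$ be a complex sequence such that, for some $\theta_0\in[0,\pi/2)$, $c_n\pm c_{-n}\in K(\theta_0)$ for $n=1,2,\dots$, and suppose there exist a natural number $N_0$ and a constant $M(\mathbf c)>0$ with $$\sum_{n=m}^{2m}|c_n-c_{n+1}|\le M(\mathbf c)\max_{m\le n<m+N_0}|c_n|\qquad\text{for all } m=1,2,\dots.$$ Let $S_n(f,x)=\sum_{k=-n}^{n}c_ke^{ikx}$ and $f(x)=\lim_{n\to\infty}S_n(f,x)$ wherever this limit exists. If $\lim_{n\to\infty}\|f-S_n(f)\|=0$, then $\lim_{n\to\infty}nc_n=0$.
   Context: For $\theta\in[0,\pi/2]$, $K(\theta)=\{z\in\mathbb C: |\arg z|\le\theta\}$. $\|g\|=\sup_{x\in\mathbb R}|g(x)|$ for $2\pi$-periodic $g$. *)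

(* Defs.v *)
From Stdlib Require Import Reals ZArith List.
From Coquelicot Require Import Coquelicot.
Open Scope R_scope.

(* K(theta) = { z : |arg z| <= theta }; 0 is included (cone convention). *)
Definition inK (theta : R) (z : C) : Prop :=
  z = 0%C \/ exists a : R, Rabs a <= theta /\ z = (Cmod z * cos a, Cmod z * sin a)%R.

Definition cexpi (k : Z) (x : R) : C := (cos (IZR k * x), sin (IZR k * x)).

(* S_n(x) = sum_{k=-n}^{n} c_k e^{ikx}, reindexed k = j - n, j = 0..2n *)
Definition Spart (c : Z -> C) (n : nat) (x : R) : C :=
  sum_n (fun j : nat =>
           Cmult (c (Z.of_nat j - Z.of_nat n)%Z) (cexpi (Z.of_nat j - Z.of_nat n)%Z x))
        (2 * n).

Definition supnorm (g : R -> C) : Rbar :=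
  Lub_Rbar (fun r => exists x : R, r = Cmod (g x)).

Definition maxblock (c : Z -> C) (m N0 : nat) : R :=
  fold_right Rmax 0 (map (fun j : nat => Cmod (c (Z.of_nat (m + j)))) (seq 0 N0)).

Definition varblock (c : Z -> C) (m : nat) : R :=
  sum_n (fun j : nat => Cmod (Cminus (c (Z.of_nat (m + j))) (c (Z.of_nat (m + j + 1))))) m.

(* Main.v *)
Require Import Defs.
From Stdlib Require Import Reals ZArith List Lia Lra.
From Coquelicot Require Import Coquelicot.
Open Scope R_scope.

Fixpoint sm (f : nat -> R) (p : nat) : R :=
  match p with O => 0 | S p => sm f p + f p end.

Lemma sm_ext f g p : (forall i, (i < p)%nat -> f i = g i) -> sm f p = sm g p.
Proof. induction p; simpl; intros H; auto. rewrite IHp, H; auto. Qed.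

Lemma sm_le f g p : (forall i, (i < p)%nat -> f i <= g i) -> sm f p <= sm g p.
Proof. induction p; simpl; intros H. lra. pose proof (H p (Nat.lt_succ_diag_r p)).
  assert (sm f p <= sm g p) by (apply IHp; intros; apply H; lia). lra. Qed.

Lemma sm_plus f g p : sm (fun i => f i + g i) p = sm f p + sm g p.
Proof. induction p; simpl; [lra|]. rewrite IHp; lra. Qed.

Lemma sm_scal a f p : sm (fun i => a * f i) p = a * sm f p.
Proof. induction p; simpl; [lra|]. rewrite IHp; lra. Qed.

Lemma sm_const a p : sm (fun _ => a) p = INR p * a.
Proof. induction p; simpl sm; [simpl; lra|]. rewrite IHp, S_INR; lra. Qed.

Lemma sm_nonneg f p : (forall i, 0 <= f i) -> 0 <= sm f p.
Proof. intros H; induction p; simpl; [lra|]. specialize (H p); lra. Qed.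

Lemma sm_mono_len f p q : (forall i, 0 <= f i) -> (p <= q)%nat -> sm f p <= sm f q.
Proof. intros H Hpq; induction Hpq; [lra|]. simpl. specialize (H m); lra. Qed.

Lemma sm_front f p : sm f (S p) = f O + sm (fun i => f (S i)) p.
Proof. induction p. simpl; lra. change (sm f (S (S p))) with (sm f (S p) + f (S p)).
  rewrite IHp; simpl; lra. Qed.

Lemma sm_swap (F : nat -> nat -> R) L N :
  sm (fun i => sm (fun j => F i j) N) L = sm (fun j => sm (fun i => F i j) L) N.
Proof. induction L; simpl. rewrite sm_const; simpl; lra.
  rewrite IHL, <- sm_plus. reflexivity. Qed.

Lemma sum_n_sm (a : nat -> R) m : sum_n a m = sm a (S m).
Proof. induction m. rewrite sum_O; simpl; lra.
  rewrite sum_Sn, IHm. reflexivity. Qed.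

Lemma fold_max_le (g : nat -> R) L : forall s, (forall i, 0 <= g i) ->
  fold_right Rmax 0 (map g (seq s L)) <= sm (fun i => g (s + i)%nat) L.
Proof. induction L; intros s H. simpl; lra. cbn [seq map fold_right].
  rewrite sm_front. replace (s+0)%nat with s by lia.
  specialize (IHL (S s) H). 
  assert (E: sm (fun i => g (S s + i)%nat) L = sm (fun i => g (s + S i)%nat) L)
   by (apply sm_ext; intros; f_equal; lia).
  rewrite <- E. apply Rmax_lub. specialize (H s).
  assert (0 <= fold_right Rmax 0 (map g (seq (S s) L))).
  { clear. revert s. induction L; intros; simpl. lra. eapply Rle_trans; [apply IHL|apply Rmax_r]. }
  lra. eapply Rle_trans; [apply IHL|]. specialize (H s). lra. Qed.

Definition u (c : Z -> C) (k : nat) (x : R) : C :=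
  Cplus (Cmult (c (Z.of_nat k)) (cexpi (Z.of_nat k) x))
        (Cmult (c (- Z.of_nat k)%Z) (cexpi (- Z.of_nat k)%Z x)).

Lemma Spart_S c n x : Spart c (S n) x = Cplus (Spart c n x) (u c (S n) x).
Proof.
  unfold Spart, sum_n.
  replace (2 * S n)%nat with (S (S (2*n))) by lia.
  rewrite sum_n_Sm by lia. rewrite sum_Sn_m by lia.
  rewrite <- sum_n_m_S.
  rewrite (sum_n_m_ext _ (fun j : nat =>
     Cmult (c (Z.of_nat j - Z.of_nat n)%Z) (cexpi (Z.of_nat j - Z.of_nat n)%Z x))).
  2:{ intros j. replace (Z.of_nat (S j) - Z.of_nat (S n))%Z with (Z.of_nat j - Z.of_nat n)%Z by lia. reflexivity. }
  replace (Z.of_nat 0 - Z.of_nat (S n))%Z with (- Z.of_nat (S n))%Z by lia.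
  replace (Z.of_nat (S (S (2 * n))) - Z.of_nat (S n))%Z with (Z.of_nat (S n)) by lia.
  unfold u. change plus with Cplus.
  set (A := sum_n_m _ 0 (2*n)). 
  apply injective_projections; simpl; ring.
Qed.

Lemma u_fst c k x : fst (u c k x) =
  fst (Cplus (c (Z.of_nat k)) (c (- Z.of_nat k)%Z)) * cos (INR k * x)
  - snd (Cminus (c (Z.of_nat k)) (c (- Z.of_nat k)%Z)) * sin (INR k * x).
Proof. unfold u, cexpi. rewrite opp_IZR, <- INR_IZR_INZ, Ropp_mult_distr_l_reverse, cos_neg, sin_neg.
  destruct (c (Z.of_nat k)), (c (- Z.of_nat k)%Z). simpl. ring. Qed.

Lemma u_snd c k x : snd (u c k x) =
  fst (Cminus (c (Z.of_nat k)) (c (- Z.of_nat k)%Z)) * sin (INR k * x)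
  + snd (Cplus (c (Z.of_nat k)) (c (- Z.of_nat k)%Z)) * cos (INR k * x).
Proof. unfold u, cexpi. rewrite opp_IZR, <- INR_IZR_INZ, Ropp_mult_distr_l_reverse, cos_neg, sin_neg.
  destruct (c (Z.of_nat k)), (c (- Z.of_nat k)%Z). simpl. ring. Qed.

Lemma tele_fst c n p x : fst (Spart c (n + p) x) - fst (Spart c n x) = sm (fun i => fst (u c (S (n+i)) x)) p.
Proof. induction p. rewrite Nat.add_0_r; simpl; lra.
  replace (n + S p)%nat with (S (n+p)) by lia. rewrite Spart_S. change (sm ?f (S p)) with (sm f p + f p). rewrite <- IHp. simpl; lra. Qed.

Lemma tele_snd c n p x : snd (Spart c (n + p) x) - snd (Spart c n x) = sm (fun i => snd (u c (S (n+i)) x)) p.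
Proof. induction p. rewrite Nat.add_0_r; simpl; lra.
  replace (n + S p)%nat with (S (n+p)) by lia. rewrite Spart_S. change (sm ?f (S p)) with (sm f p + f p). rewrite <- IHp. simpl; lra. Qed.

Lemma abs_fst_le (z : C) : Rabs (fst z) <= Cmod z.
Proof. pose proof (Rmax_Cmod z). pose proof (Rmax_l (Rabs (fst z)) (Rabs (snd z))). lra. Qed.
Lemma abs_snd_le (z : C) : Rabs (snd z) <= Cmod z.
Proof. pose proof (Rmax_Cmod z). pose proof (Rmax_r (Rabs (fst z)) (Rabs (snd z))). lra. Qed.

Lemma Cmod_le_sum (z : C) : Cmod z <= Rabs (fst z) + Rabs (snd z).
Proof. destruct z as [a b]. unfold Cmod; simpl.
  rewrite <- (sqrt_Rsqr (Rabs a + Rabs b)) by (pose proof (Rabs_pos a); pose proof (Rabs_pos b); lra).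
  apply sqrt_le_1_alt. unfold Rsqr. rewrite !Rmult_1_r.
  pose proof (Rabs_pos a); pose proof (Rabs_pos b).
  replace (a*a) with (Rabs a * Rabs a) by (rewrite <- Rabs_mult; apply Rabs_pos_eq; nra).
  replace (b*b) with (Rabs b * Rabs b) by (rewrite <- Rabs_mult; apply Rabs_pos_eq; nra).
  nra. Qed.

Lemma cone (th : R) (z : C) : 0 <= th < PI/2 -> inK th z -> cos th * Cmod z <= fst z.
Proof. intros Hth [Hz|[a [Ha Hz]]].
  - subst. rewrite Cmod_0. simpl. lra.
  - assert (fst z = Cmod z * cos a) by (destruct z; simpl; injection Hz; auto).
    rewrite H. pose proof (Cmod_ge_0 z). pose proof PI_RGT_0.
    assert (cos th <= cos a).
    { destruct (Rcase_abs a).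
      - rewrite Rabs_left in Ha by lra. rewrite <- (cos_neg a). apply cos_decr_1; lra.
      - rewrite Rabs_right in Ha by lra. apply cos_decr_1; lra. }
    nra. Qed.

Lemma Rabs_le_inv (a b : R) : Rabs a <= b -> - b <= a <= b.
Proof. intros H. destruct (Rcase_abs a); [rewrite Rabs_left in H|rewrite Rabs_right in H]; lra. Qed.

Lemma fst_Cminus (a b : C) : fst (Cminus a b) = fst a - fst b.
Proof. destruct a, b; simpl; ring. Qed.
Lemma snd_Cminus (a b : C) : snd (Cminus a b) = snd a - snd b.
Proof. destruct a, b; simpl; ring. Qed.

Lemma sin_ge_half y : PI/4 <= y <= PI/2 -> 1/2 <= sin y.
Proof. intros H. pose proof PI_RGT_0. rewrite <- sin_PI6. apply sin_incr_1; lra. Qed.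

Lemma Ebound (c : Z -> C) (th : R) (Hth : 0 <= th < PI/2)
  (HK : forall n : nat, (1 <= n)%nat ->
        inK th (Cplus (c (Z.of_nat n)) (c (- Z.of_nat n)%Z)) /\
        inK th (Cminus (c (Z.of_nat n)) (c (- Z.of_nat n)%Z)))
  (f : R -> C) (N : nat) (eps : R)
  (HN : forall n, (N <= n)%nat -> forall x, Cmod (Cminus (f x) (Spart c n x)) <= eps)
  (m : nat) (Hm : (N < m)%nat) :
  sm (fun i => Cmod (c (Z.of_nat (m+i)))) (S m) <=
   (2 / cos th + (2 / cos th) * (2 + 2 / cos th)) * eps.
Proof.
  destruct m as [|m']; [lia|]. set (m := S m').
  pose proof PI_RGT_0.
  assert (Hg : 0 < cos th) by (apply cos_gt_0; lra). set (g := cos th) in *.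
  assert (Hd : forall x, Rabs (fst (Spart c (m' + S m) x) - fst (Spart c m' x)) <= 2*eps
                    /\ Rabs (snd (Spart c (m' + S m) x) - snd (Spart c m' x)) <= 2*eps).
  { intros x. pose proof (HN (m' + S m)%nat ltac:(lia) x) as H1.
    pose proof (HN m' ltac:(lia) x) as H2.
    pose proof (abs_fst_le (Cminus (f x) (Spart c (m' + S m) x))) as G1.
    pose proof (abs_fst_le (Cminus (f x) (Spart c m' x))) as G2.
    pose proof (abs_snd_le (Cminus (f x) (Spart c (m' + S m) x))) as G3.
    pose proof (abs_snd_le (Cminus (f x) (Spart c m' x))) as G4.
    rewrite fst_Cminus in G1, G2; rewrite snd_Cminus in G3, G4.
    apply Rabs_le_inv in G1, G2, G3, G4.
    split; apply Rabs_le; split; lra. }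
  set (A := fun k : nat => Cplus (c (Z.of_nat k)) (c (- Z.of_nat k)%Z)).
  set (B := fun k : nat => Cminus (c (Z.of_nat k)) (c (- Z.of_nat k)%Z)).
  set (a := fun i => Cmod (A (m + i)%nat)).
  set (b := fun i => Cmod (B (m + i)%nat)).
  assert (Ha : g * sm a (S m) <= 2 * eps).
  { rewrite <- sm_scal. destruct (Hd 0) as [H1 _]. rewrite tele_fst in H1.
    apply Rabs_le_inv in H1. eapply Rle_trans; [|apply H1].
    apply sm_le. intros i Hi. rewrite u_fst. rewrite Rmult_0_r, cos_0, sin_0.
    replace (S (m' + i)) with (m + i)%nat by (unfold m; lia).
    unfold a. pose proof (cone th (A (m+i)%nat) Hth (proj1 (HK (m+i)%nat ltac:(unfold m; lia)))).
    unfold A in *. unfold g. lra. }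
  set (x0 := PI / (4 * INR m)).
  assert (Hm0 : 0 < INR m) by (apply lt_0_INR; unfold m; lia).
  assert (Hb : (g/2) * sm b (S m) - sm a (S m) <= 2 * eps).
  { rewrite <- sm_scal. 
    replace (sm (fun i => g / 2 * b i) (S m) - sm a (S m)) with
      (sm (fun i => g / 2 * b i + (-1) * a i) (S m)) by (rewrite sm_plus, (sm_scal (-1) a); ring).
    destruct (Hd x0) as [_ H1]. rewrite tele_snd in H1.
    apply Rabs_le_inv in H1. eapply Rle_trans; [|apply H1].
    apply sm_le. intros i Hi. rewrite u_snd.
    replace (S (m' + i)) with (m + i)%nat by (unfold m; lia).
    pose proof (cone th (B (m+i)%nat) Hth (proj2 (HK (m+i)%nat ltac:(unfold m; lia)))) as HB.
    fold (B (m+i)%nat) (A (m+i)%nat). fold g in HB. fold (b i) in HB.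
    assert (Hs : 1/2 <= sin (INR (m+i) * x0)).
    { apply sin_ge_half. rewrite plus_INR.
      assert (INR i <= INR m) by (apply le_INR; lia). pose proof (pos_INR i).
      assert (PI = 4 * INR m * x0) by (unfold x0; field; lra).
      assert (0 < x0) by (unfold x0; apply Rdiv_lt_0_compat; lra). nra. }
    pose proof (COS_bound (INR (m+i) * x0)) as Hc.
    pose proof (abs_snd_le (A (m+i)%nat)) as HA. fold (a i) in HA. apply Rabs_le_inv in HA.
    pose proof (Cmod_ge_0 (B (m+i)%nat)) as HB0. fold (b i) in HB0.
    assert (0 <= fst (B (m + i)%nat)) by nra.
    assert (fst (B (m + i)%nat) / 2 <= fst (B (m + i)%nat) * sin (INR (m + i) * x0)) by nra.
    assert (- a i <= snd (A (m + i)%nat) * cos (INR (m + i) * x0)) by nra.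
    lra. }
  assert (Hc : sm (fun i => Cmod (c (Z.of_nat (m+i)))) (S m) <= sm a (S m) + sm b (S m)).
  { rewrite <- sm_plus. apply sm_le. intros i _. unfold a, b, A, B.
    set (p := c (Z.of_nat (m+i))). set (q := c (- Z.of_nat (m+i))%Z).
    pose proof (Cmod_le_sum p) as K0. pose proof (abs_fst_le (Cplus p q)) as K1. pose proof (abs_snd_le (Cplus p q)) as K2.
    pose proof (abs_fst_le (Cminus p q)) as K3. pose proof (abs_snd_le (Cminus p q)) as K4.
    destruct p as [p1 p2], q as [q1 q2]. simpl in K1, K2, K3, K4.
    apply Rabs_le_inv in K1, K2, K3, K4.
    apply (Rle_trans _ _ _ K0). simpl fst; simpl snd.
    set (CA := Cmod ((p1, p2) + (q1, q2))) in *. set (CB := Cmod ((p1, p2) - (q1, q2))) in *.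
    assert (Rabs p1 <= (CA + CB)/2) by (apply Rabs_le; lra).
    assert (Rabs p2 <= (CA + CB)/2) by (apply Rabs_le; lra). lra. }
  assert (Ha' : sm a (S m) <= 2 / g * eps).
  { apply (Rmult_le_reg_l g); auto. replace (g * (2/g*eps)) with (2*eps) by (field; lra). lra. }
  assert (Hb' : sm b (S m) <= 2 / g * (2 * eps + sm a (S m))).
  { apply (Rmult_le_reg_l (g/2)). lra. replace (g/2 * (2/g*(2*eps + sm a (S m)))) with (2*eps + sm a (S m)) by (field; lra). lra. }
  assert (0 <= 2/g) by (apply Rlt_le, Rdiv_lt_0_compat; lra).
  assert (2 / g * (2 * eps + sm a (S m)) <= 2 / g * (2 * eps + 2/g*eps)) by (apply Rmult_le_compat_l; lra).
  replace ((2 / g + 2 / g * (2 + 2 / g)) * eps) with (2/g*eps + 2 / g * (2 * eps + 2/g*eps)) by ring.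
  lra.
Qed.

Lemma Cmod_step (a b : C) : Cmod b <= Cmod a + Cmod (Cminus a b).
Proof. replace b with (Cplus a (Copp (Cminus a b))) at 1.
  - eapply Rle_trans; [apply Cmod_triangle|]. rewrite Cmod_opp. lra.
  - apply injective_projections; destruct a, b; simpl; ring. Qed.

Lemma block (c : Z -> C) (N0 : nat) (HN0 : (1 <= N0)%nat) (M : R) (HM : 0 < M)
  (Hvar : forall m : nat, (1 <= m)%nat -> varblock c m <= M * maxblock c m N0)
  (m i : nat) (Hm : (1 <= m)%nat) (Hi : (i <= m)%nat) :
  Cmod (c (Z.of_nat (m + i))) <= (1 + M) * sm (fun t => Cmod (c (Z.of_nat (m + t)))) N0.
Proof.
  set (d := fun j => Cmod (Cminus (c (Z.of_nat (m + j))) (c (Z.of_nat (m + j + 1))))).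
  assert (Ht : forall i, Cmod (c (Z.of_nat (m + i))) <= Cmod (c (Z.of_nat m)) + sm d i).
  { induction i0. simpl. rewrite Nat.add_0_r. lra.
    simpl sm. replace (m + S i0)%nat with (m + i0 + 1)%nat by lia.
    pose proof (Cmod_step (c (Z.of_nat (m + i0))) (c (Z.of_nat (m + i0 + 1)))). unfold d at 2. lra. }
  assert (Hd : sm d i <= varblock c m).
  { unfold varblock. rewrite sum_n_sm. apply sm_mono_len. intros; apply Cmod_ge_0. lia. }
  assert (Hmb : maxblock c m N0 <= sm (fun t => Cmod (c (Z.of_nat (m + t)))) N0).
  { unfold maxblock. apply (fold_max_le (fun j => Cmod (c (Z.of_nat (m + j)))) N0 0).
    intros; apply Cmod_ge_0. }
  assert (Hc : Cmod (c (Z.of_nat m)) <= maxblock c m N0).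
  { unfold maxblock. destruct N0 as [|N0']; [lia|]. cbn [seq map fold_right].
    rewrite Nat.add_0_r. apply Rmax_l. }
  specialize (Hvar m Hm). specialize (Ht i).
  assert ((1+M) * maxblock c m N0 <= (1+M) * sm (fun t => Cmod (c (Z.of_nat (m + t)))) N0)
    by (apply Rmult_le_compat_l; lra).
  lra.
Qed.

Theorem lemma2 (c : Z -> C) (theta0 : R)
  (Htheta : 0 <= theta0 < PI / 2)
  (HK : forall n : nat, (1 <= n)%nat ->
        inK theta0 (Cplus (c (Z.of_nat n)) (c (- Z.of_nat n)%Z)) /\
        inK theta0 (Cminus (c (Z.of_nat n)) (c (- Z.of_nat n)%Z)))
  (N0 : nat) (HN0 : (1 <= N0)%nat) (M : R) (HM : 0 < M)
  (Hvar : forall m : nat, (1 <= m)%nat -> varblock c m <= M * maxblock c m N0)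
  (f : R -> C)
  (Hf : forall (x : R) (l : C),
        filterlim (fun n : nat => Spart c n x) eventually (locally l) -> f x = l)
  (Hunif : forall eps : R, 0 < eps -> exists N : nat, forall n : nat, (N <= n)%nat ->
        Rbar_le (supnorm (fun x => Cminus (f x) (Spart c n x))) (Finite eps)) :
  filterlim (fun n : nat => Cmult (RtoC (INR n)) (c (Z.of_nat n))) eventually (@locally C_UniformSpace (RtoC 0)).
Proof.
  apply filterlim_locally. intros [eps Heps]. simpl.
  pose proof PI_RGT_0.
  assert (Hg : 0 < cos theta0) by (apply cos_gt_0; lra).
  set (g := cos theta0) in *.
  set (K := 2 / g + 2 / g * (2 + 2 / g)).
  assert (HK0 : 0 < K).
  { assert (0 < 2/g) by (apply Rdiv_lt_0_compat; lra). unfold K. nra. }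
  assert (HN0' : 1 <= INR N0) by (apply (le_INR 1); lia).
  set (eps' := eps / (6 * (1 + M) * INR N0 * K)).
  assert (He' : 0 < eps') by (unfold eps'; apply Rdiv_lt_0_compat; [lra|]; 
     apply Rmult_lt_0_compat; [|lra]; apply Rmult_lt_0_compat; lra).
  destruct (Hunif eps' He') as [N HN].
  assert (HN2 : forall n, (N <= n)%nat -> forall x, Cmod (Cminus (f x) (Spart c n x)) <= eps').
  { intros n Hn x. specialize (HN n Hn). unfold supnorm in HN.
    destruct (Lub_Rbar_correct (fun r => exists x : R, r = Cmod (Cminus (f x) (Spart c n x)))) as [Hub _].
    assert (Rbar_le (Finite (Cmod (Cminus (f x) (Spart c n x)))) (Finite eps')).
    { eapply Rbar_le_trans; [apply Hub; exists x; reflexivity | exact HN]. }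
    exact H0. }
  set (w := fun j : nat => Cmod (c (Z.of_nat j))).
  assert (HE : forall m, (N < m)%nat -> sm (fun i => w (m + i)%nat) (S m) <= K * eps').
  { intros m Hm. exact (Ebound c theta0 Htheta HK f N eps' HN2 m Hm). }
  exists (2 * N + 3)%nat. intros n Hn.
  apply (@norm_compat1 C_AbsRing C_NormedModule). change (norm ?z) with (Cmod z). change (Cmod (minus ?z ?w)) with (Cmod (Cminus z w)).
  replace (Cminus (Cmult (RtoC (INR n)) (c (Z.of_nat n))) (RtoC 0)) with (Cmult (RtoC (INR n)) (c (Z.of_nat n)))
   by (apply injective_projections; simpl; ring).
  rewrite Cmod_mult, Cmod_R, Rabs_pos_eq by apply pos_INR.
  assert (Hq : exists q h, (N < h)%nat /\ (1 <= q)%nat /\ (h + q <= S n)%nat /\ (n <= 2 * h)%nat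
                     /\ (q <= h)%nat /\ (n <= 2 * q + 1)%nat).
  { destruct (Nat.Even_or_Odd n) as [[q Hq]|[q Hq]].
    - exists q, q. lia.
    - exists q, (S q). lia. }
  destruct Hq as [q [h [Hh [Hq1 [Hhq [Hnh [Hqh Hnq]]]]]]].
  assert (Key : INR q * w n <= (1 + M) * (INR N0 * (K * eps'))).
  { rewrite <- sm_const.
    eapply Rle_trans.
    { apply (sm_le _ (fun i => (1 + M) * sm (fun t => w (h + i + t)%nat) N0)).
      intros i Hi. unfold w.
      replace n with (h + i + (n - (h + i)))%nat at 1 by lia.
      apply (block c N0 HN0 M HM Hvar); lia. }
    rewrite sm_scal. apply Rmult_le_compat_l; [lra|].
    rewrite (sm_swap (fun i t => w (h + i + t)%nat)).
    rewrite <- sm_const. apply sm_le. intros t Ht.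
    eapply Rle_trans; [|apply (HE (h + t)%nat); lia].
    rewrite (sm_ext _ (fun i => w (h + t + i)%nat)) by (intros; f_equal; lia).
    apply sm_mono_len. intros; apply Cmod_ge_0. lia. }
  assert (Hw : 0 <= w n) by apply Cmod_ge_0.
  assert (Hnq' : INR n <= 3 * INR q).
  { apply le_INR in Hnq. apply le_INR in Hq1. rewrite plus_INR, mult_INR in Hnq. simpl in Hnq, Hq1. lra. }
  assert (Hval : (1 + M) * (INR N0 * (K * eps')) = eps / 6).
  { unfold eps'. field. split; [lra|]. split; lra. }
  rewrite Hval in Key. change (Cmod (c (Z.of_nat n))) with (w n).
  assert (INR n * w n <= 3 * INR q * w n) by (apply Rmult_le_compat_r; lra). lra.
Qed.
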